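(* Let $UI(X:Y\setminus Z)$, $UI(X:Z\setminus Y)$, $SI(X:Y;Z)$ and $CI(X:Y;Z)$ be non-negative continuous real functions on $\Delta$ such that for every $P\in\Delta$: (i) $MI(X:(Y,Z)) = SI(X:Y;Z) + UI(X:Y\setminus Z) + UI(X:Z\setminus Y) + CI(X:Y;Z)$, (ii) $MI(X:Y) = SI(X:Y;Z) + UI(X:Y\setminus Z)$ and $MI(X:Z) = SI(X:Y;Z) + UI(X:Z\setminus Y)$, (all quantities evaluated at $P$), and such that (iii) $UI(X:Y\setminus Z)$ and $UI(X:Z\setminus Y)$ take the same value at any two distributions $P,P'\in\Delta$ having the same $(X,Y)$-marginal and the same $(X,Z)$-marginal. Then for every $P\in\Delta$: $UI(X:Y\setminus Z)\le \widetilde{UI}(X:Y\setminus Z)$, $UI(X:Z\setminus Y)\le \widetilde{UI}(X:Z\setminus Y)$, $SI(X:Y;Z)\ge \widetilde{SI}(X:Y;Z)$, and $CI(X:Y;Z)\ge\widetilde{CI}(X:Y;Z)$. Moreover, if for $P\in\Delta$ there exists $Q\in\Delta_P$ with $CI_Q(X:Y;Z)=0$ (i.e. $CI$ evaluated at $Q$ vanishes), then equality holds in all four inequalities at $P$. Conversely, if equality holds at $P$ in one of the four inequalities, then there exists $Q\in\Delta_P$ with $CI_Q(X:Y;Z)=0$.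
   Context: $X,Y,Z$ are random variables with finite state spaces $\mathcal X,\mathcal Y,\mathcal Z$. $\Delta$ denotes the set of all probability distributions on $\mathcal X\times\mathcal Y\times\mathcal Z$ (joint distributions of $X,Y,Z$); $P\in\Delta$ denotes the ''true'' joint distribution, and information quantities without subscript are computed w.r.t. $P$, while a subscript $Q$ (e.g. $MI_Q$, $H_Q$) means computed w.r.t. $Q\in\Delta$. For $P\in\Delta$, $\Delta_P=\{Q\in\Delta: Q(X=x,Y=y)=P(X=x,Y=y)\text{ and }Q(X=x,Z=z)=P(X=x,Z=z)\ \forall x,y,z\}$. Co-information: $CoI_Q(X;Y;Z)=MI_Q(X:Y)-MI_Q(X:Y|Z)$. Define $\widetilde{UI}(X:Y\setminus Z)=\min_{Q\in\Delta_P}MI_Q(X:Y|Z)$, $\widetilde{UI}(X:Z\setminus Y)=\min_{Q\in\Delta_P}MI_Q(X:Z|Y)$, $\widetilde{SI}(X:Y;Z)=\max_{Q\in\Delta_P}CoI_Q(X;Y;Z)$, $\widetilde{CI}(X:Y;Z)=MI(X:(Y,Z))-\min_{Q\in\Delta_P}MI_Q(X:(Y,Z))$. *)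

(* Defs.v *)
From Stdlib Require Import Reals ClassicalEpsilon.
From mathcomp Require Import all_boot.
Set Implicit Arguments. Unset Strict Implicit.
Open Scope R_scope.

Section Info.
Variables (X Y Z : finType).

Definition jdist := X -> Y -> Z -> R.

Definition sumX (f : X -> R) := \big[Rplus/0]_(x : X) f x.
Definition sumY (f : Y -> R) := \big[Rplus/0]_(y : Y) f y.
Definition sumZ (f : Z -> R) := \big[Rplus/0]_(z : Z) f z.

Definition inDelta (P : jdist) : Prop :=
  (forall x y z, 0 <= P x y z) /\
  sumX (fun x => sumY (fun y => sumZ (fun z => P x y z))) = 1.

Definition mXY (P : jdist) x y := sumZ (fun z => P x y z).
Definition mXZ (P : jdist) x z := sumY (fun y => P x y z).
Definition mYZ (P : jdist) y z := sumX (fun x => P x y z).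
Definition mX (P : jdist) x := sumY (fun y => sumZ (fun z => P x y z)).
Definition mY (P : jdist) y := sumX (fun x => sumZ (fun z => P x y z)).
Definition mZ (P : jdist) z := sumX (fun x => sumY (fun y => P x y z)).

Definition inDeltaP (P Q : jdist) : Prop :=
  inDelta Q /\ (forall x y, mXY Q x y = mXY P x y)
            /\ (forall x z, mXZ Q x z = mXZ P x z).

Definition eta (t : R) : R := if Rle_dec t 0 then 0 else - (t * ln t).

Definition H_XYZ (P : jdist) := sumX (fun x => sumY (fun y => sumZ (fun z => eta (P x y z)))).
Definition H_XY (P : jdist) := sumX (fun x => sumY (fun y => eta (mXY P x y))).
Definition H_XZ (P : jdist) := sumX (fun x => sumZ (fun z => eta (mXZ P x z))).
Definition H_YZ (P : jdist) := sumY (fun y => sumZ (fun z => eta (mYZ P y z))).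
Definition H_X (P : jdist) := sumX (fun x => eta (mX P x)).
Definition H_Y (P : jdist) := sumY (fun y => eta (mY P y)).
Definition H_Z (P : jdist) := sumZ (fun z => eta (mZ P z)).

Definition MI_XY (P : jdist) := H_X P + H_Y P - H_XY P.
Definition MI_XZ (P : jdist) := H_X P + H_Z P - H_XZ P.
Definition MI_X_YZ (P : jdist) := H_X P + H_YZ P - H_XYZ P.
Definition MI_XY_Z (P : jdist) := H_XZ P + H_YZ P - H_XYZ P - H_Z P.
Definition MI_XZ_Y (P : jdist) := H_XY P + H_YZ P - H_XYZ P - H_Y P.

Definition CoI (P : jdist) := MI_XY P - MI_XY_Z P.

Definition continuous_on_Delta (F : jdist -> R) : Prop :=
  forall P, inDelta P -> forall eps, 0 < eps -> exists delta, 0 < delta /\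
    forall Q, inDelta Q -> (forall x y z, Rabs (Q x y z - P x y z) < delta) ->
      Rabs (F Q - F P) < eps.

End Info.

Definition is_inf (E : R -> Prop) (m : R) : Prop :=
  (forall v, E v -> m <= v) /\ (forall b, (forall v, E v -> b <= v) -> b <= m).
Definition is_sup (E : R -> Prop) (m : R) : Prop :=
  (forall v, E v -> v <= m) /\ (forall b, (forall v, E v -> v <= b) -> m <= b).
Definition Inf (E : R -> Prop) : R := epsilon (inhabits 0) (is_inf E).
Definition Sup (E : R -> Prop) : R := epsilon (inhabits 0) (is_sup E).

(* min / max over Delta_P (attained, hence equal to inf / sup) *)
Definition minDeltaP X Y Z (P : jdist X Y Z) (F : jdist X Y Z -> R) : R :=
  Inf (fun v => exists Q, inDeltaP P Q /\ v = F Q).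
Definition maxDeltaP X Y Z (P : jdist X Y Z) (F : jdist X Y Z -> R) : R :=
  Sup (fun v => exists Q, inDeltaP P Q /\ v = F Q).

Definition UIt_Y X Y Z (P : jdist X Y Z) := minDeltaP P (@MI_XY_Z X Y Z).
Definition UIt_Z X Y Z (P : jdist X Y Z) := minDeltaP P (@MI_XZ_Y X Y Z).
Definition SIt X Y Z (P : jdist X Y Z) := maxDeltaP P (@CoI X Y Z).
Definition CIt X Y Z (P : jdist X Y Z) := MI_X_YZ P - minDeltaP P (@MI_X_YZ X Y Z).

(* Main.v *)
Require Import Defs.
From HB Require Import structures.
From Stdlib Require Import Reals Lra Lia ClassicalEpsilon Classical FunctionalExtensionality.
From mathcomp Require Import all_boot.
Open Scope R_scope.
Set Implicit Arguments. Unset Strict Implicit.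

HB.instance Definition _ := Monoid.isComLaw.Build R 0 Rplus (fun a b c => esym (Rplus_assoc a b c)) Rplus_comm Rplus_0_l.

Lemma inf_exists (E : R -> Prop) : (exists v, E v) -> (exists b, forall v, E v -> b <= v) ->
  is_inf E (Inf E).
Proof.
move=> [v0 Ev0] [b Hb].
unfold Inf; apply: epsilon_spec.
have [m [Hm1 Hm2]] : {m : R | is_lub (fun w => E (- w)) m}.
  apply: completeness.
  - exists (- b) => w Ew; have := Hb _ Ew; lra.
  - exists (- v0); by rewrite Ropp_involutive.
exists (- m); split.
- move=> v Ev; have : - v <= m by apply: Hm1; rewrite Ropp_involutive.
  lra.
- move=> c Hc; have : m <= - c.
    apply: Hm2 => w Ew; have := Hc _ Ew; lra.
  lra.
Qed.

Lemma sup_exists (E : R -> Prop) : (exists v, E v) -> (exists b, forall v, E v -> v <= b) ->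
  is_sup E (Sup E).
Proof.
move=> [v0 Ev0] [b Hb].
unfold Sup; apply: epsilon_spec.
have [m [Hm1 Hm2]] : {m : R | is_lub E m}.
  by apply: completeness; [exists b | exists v0].
by exists m; split.
Qed.

Lemma inf_unique E a b : is_inf E a -> is_inf E b -> a = b.
Proof. move=> [a1 a2] [b1 b2]; apply: Rle_antisym; [apply: b2 a1 | apply: a2 b1]. Qed.
Lemma sup_unique E a b : is_sup E a -> is_sup E b -> a = b.
Proof. move=> [a1 a2] [b1 b2]; apply: Rle_antisym; [apply: a2 b1 | apply: b2 a1]. Qed.

Section S.
Variables (X Y Z : finType).
Implicit Types P Q : jdist X Y Z.

Definition CIset (G : jdist X Y Z -> R) P := fun v => exists Q, inDeltaP P Q /\ v = G Q.

Lemma min_shift P (F G : jdist X Y Z -> R) c s :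
  (forall Q, inDeltaP P Q -> F Q = c + G Q) -> is_inf (CIset G P) s ->
  (exists Q, inDeltaP P Q) -> minDeltaP P F = c + s.
Proof.
move=> HF [s1 s2] [Q0 HQ0].
have Hi : is_inf (CIset F P) (c + s).
  split.
  - move=> v [Q [HQ ->]]; rewrite HF //.
    have : s <= G Q by apply: s1; exists Q.
    lra.
  - move=> b Hb; have : b - c <= s.
      apply: s2 => v [Q [HQ ->]].
      have : b <= F Q by apply: Hb; exists Q.
      rewrite HF //; lra.
    lra.
apply: (inf_unique _ Hi); apply: inf_exists.
  by exists (F Q0), Q0.
exists (c + s) => v Hv; by case: Hi => H1 _; apply: H1.
Qed.

Lemma max_shift P (F G : jdist X Y Z -> R) c s :
  (forall Q, inDeltaP P Q -> F Q = c - G Q) -> is_inf (CIset G P) s ->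
  (exists Q, inDeltaP P Q) -> maxDeltaP P F = c - s.
Proof.
move=> HF [s1 s2] [Q0 HQ0].
have Hi : is_sup (CIset F P) (c - s).
  split.
  - move=> v [Q [HQ ->]]; rewrite HF //.
    have : s <= G Q by apply: s1; exists Q.
    lra.
  - move=> b Hb; have : c - b <= s.
      apply: s2 => v [Q [HQ ->]].
      have : F Q <= b by apply: Hb; exists Q.
      rewrite HF //; lra.
    lra.
apply: (sup_unique _ Hi); apply: sup_exists.
  by exists (F Q0), Q0.
exists (c - s) => v Hv; by case: Hi => H1 _; apply: H1.
Qed.

Lemma MI_XY_marg P Q : (forall x y, mXY Q x y = mXY P x y) -> MI_XY Q = MI_XY P.
Proof.
move=> e; rewrite /MI_XY /H_X /H_Y /H_XY /mX /mY /sumX /sumY.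
congr (_ + _ - _).
- apply: eq_bigr => x _; congr Defs.eta; apply: eq_bigr => y _; exact: e.
- apply: eq_bigr => y _; congr Defs.eta; apply: eq_bigr => x _; exact: e.
- apply: eq_bigr => x _; apply: eq_bigr => y _; by rewrite e.
Qed.

Lemma MI_XZ_marg P Q : (forall x z, mXZ Q x z = mXZ P x z) -> MI_XZ Q = MI_XZ P.
Proof.
move=> e; rewrite /MI_XZ /H_X /H_Z /H_XZ /mX /mZ /sumX /sumY /sumZ.
congr (_ + _ - _).
- apply: eq_bigr => x _; congr Defs.eta.
  rewrite exchange_big /=; symmetry; rewrite exchange_big /=; symmetry.
  apply: eq_bigr => z _; exact: e.
- apply: eq_bigr => z _; congr Defs.eta; apply: eq_bigr => x _; exact: e.
- apply: eq_bigr => x _; apply: eq_bigr => z _; by rewrite e.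
Qed.

End S.

Lemma incr_lt (f : nat -> nat) : (forall n, (f n < f n.+1)%N) ->
  forall m n, (m < n)%N -> (f m < f n)%N.
Proof.
move=> Hf m; elim=> [|n IH] //; rewrite ltnS leq_eqVlt => /orP [/eqP -> //|].
move=> /IH Hmn; exact: ltn_trans Hmn (Hf n).
Qed.

Lemma incr_ge (f : nat -> nat) : (forall n, (f n < f n.+1)%N) -> forall n, (n <= f n)%N.
Proof.
move=> Hf; elim=> [|n IH] //; exact: leq_ltn_trans IH (Hf n).
Qed.

Lemma inv_small (k N : nat) : (0 < N)%N -> (N <= k.+1)%N -> / INR k.+1 <= / INR N.
Proof.
move=> H0 H1; apply: Rinv_le_contravar.
- apply: lt_0_INR; exact/ltP.
- apply: le_INR; exact/leP.
Qed.

Lemma bw_subseq (v : nat -> R) (b : R) : (forall n, 0 <= v n <= b) ->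
  exists psi : nat -> nat, (forall n, (psi n < psi n.+1)%N) /\
    exists c, Un_cv (fun n => v (psi n)) c.
Proof.
move=> Hv.
have [l Hl] := Bolzano_Weierstrass v (fun c => 0 <= c <= b) (compact_P3 0 b) Hv.
have pick : forall k m : nat, exists p, (m <= p)%N /\ Rabs (v p - l) < / INR k.+1.
  move=> k m.
  have hpos : 0 < / INR k.+1 by apply: Rinv_0_lt_compat; apply: lt_0_INR; lia.
  have [p [Hp1 Hp2]] := Hl (disc l (mkposreal _ hpos)) m
     (ex_intro _ (mkposreal _ hpos) (fun y Hy => Hy)).
  exists p; split; [exact/leP | exact: Hp2].
pose g k m := proj1_sig (constructive_indefinite_description _ (pick k m)).
have Hg k m : (m <= g k m)%N /\ Rabs (v (g k m) - l) < / INR k.+1.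
  exact: (proj2_sig (constructive_indefinite_description _ (pick k m))).
pose psi := fix f n := match n with 0 => g 0%N 0%N | S n' => g n (S (f n')) end.
have Hpsi n : Rabs (v (psi n) - l) < / INR n.+1.
  by case: n => [|n] /=; apply: (proj2 (Hg _ _)).
exists psi; split.
  by move=> n /=; apply: (proj1 (Hg _ _)).
exists l => eps Heps.
have [N [HN1 HN2]] := archimed_cor1 eps Heps.
exists N => n /leP Hn; rewrite /R_dist.
apply: Rlt_le_trans (Hpsi n) _.
apply: Rle_trans (Rlt_le _ _ HN1).
apply: inv_small; [exact/ltP | exact: leqW].
Qed.

Section Multi.
Variable T : finType.
Variables (u : nat -> T -> R) (b : T -> R).
Hypothesis Hu : forall n t, 0 <= u n t <= b t.

Lemma multi_subseq (l : seq T) : exists phi : nat -> nat,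
  (forall n, (phi n < phi n.+1)%N) /\ exists L : T -> R,
    forall eps, 0 < eps -> exists N, forall n, (N <= n)%N ->
      forall t, t \in l -> Rabs (u (phi n) t - L t) < eps.
Proof.
elim: l => [|a l [phi [Hphi [L HL]]]].
  exists id; split => // ; exists (fun _ => 0) => eps _; by exists 0%N.
have [psi [Hpsi [c Hc]]] := @bw_subseq (fun n => u (phi n) a) (b a) (fun n => Hu _ _).
exists (fun n => phi (psi n)); split.
  by move=> n; apply: incr_lt => //.
exists (fun t => if t == a then c else L t) => eps Heps.
have [N1 HN1] := HL eps Heps.
have [N2 HN2] := Hc eps Heps.
exists (maxn N1 N2) => n; rewrite geq_max => /andP [H1 H2] t.
rewrite in_cons; case: eqP => [-> _ | Hta /= Htl].
  by have := HN2 n (leP H2); rewrite /R_dist.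
apply: HN1 => //; apply: leq_trans H1 _; exact: incr_ge.
Qed.
End Multi.

Lemma le_sum (T : finType) (f : T -> R) i : (forall j, 0 <= f j) ->
  f i <= \big[Rplus/0]_j f j.
Proof.
move=> Hf; rewrite (bigD1 i) //=.
have : 0 <= \big[Rplus/0]_(j | j != i) f j.
  apply: big_ind => //; [lra | move=> x y; lra].
lra.
Qed.

Lemma sum_close (T : finType) (f g : T -> R) d : (forall i, Rabs (f i - g i) <= d) ->
  Rabs (\big[Rplus/0]_i f i - \big[Rplus/0]_i g i) <= d * \big[Rplus/0]_(i : T) 1.
Proof.
move=> H.
apply: (big_rec3 (fun a b c => Rabs (a - b) <= d * c)).
  rewrite Rminus_0_r Rabs_R0 Rmult_0_r; lra.
move=> i a b' c _ Hc.
replace (f i + a - (g i + b')) with ((f i - g i) + (a - b')) by ring.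
apply: Rle_trans (Rabs_triang _ _) _.
have := H i; lra.
Qed.

Lemma sum_one_ge0 (T : finType) : 0 <= \big[Rplus/0]_(i : T) 1.
Proof. apply: big_ind => //; [lra | move=> x y; lra | move=> _ _; lra]. Qed.

Lemma zero_of_small r C : 0 <= C -> (forall d, 0 < d -> Rabs r <= d * C) -> r = 0.
Proof.
move=> HC H; case: (Req_dec r 0) => // Hr.
have Ha : 0 < Rabs r by apply: Rabs_pos_lt.
have Hd : 0 < Rabs r / (C + 1) by apply: Rdiv_lt_0_compat; lra.
have := H _ Hd.
have -> : Rabs r / (C + 1) * C = Rabs r - Rabs r / (C + 1).
  field; lra.
lra.
Qed.

Section Att.
Variables (X Y Z : finType).

Lemma attain (P : jdist X Y Z) (F : jdist X Y Z -> R) : inDelta P -> continuous_on_Delta F ->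
  (forall Q, inDelta Q -> 0 <= F Q) -> is_inf (CIset F P) 0 ->
  exists Q, inDeltaP P Q /\ F Q = 0.
Proof.
move=> HP cF nF [Hi1 Hi2].
have Hex : forall n : nat, exists Q, inDeltaP P Q /\ F Q < / INR n.+1.
  move=> n; apply: NNPP => Hn.
  have hpos : 0 < / INR n.+1 by apply: Rinv_0_lt_compat; apply: lt_0_INR; lia.
  have : / INR n.+1 <= 0.
    apply: Hi2 => v [Q [HQ ->]]; apply: Rnot_lt_le => Hlt; apply: Hn; by exists Q.
  lra.
pose sQ n := proj1_sig (constructive_indefinite_description _ (Hex n)).
have HsQ n : inDeltaP P (sQ n) /\ F (sQ n) < / INR n.+1.
  exact: (proj2_sig (constructive_indefinite_description _ (Hex n))).
pose u n (t : (X * Y * Z)%type) := sQ n t.1.1 t.1.2 t.2.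
pose b (t : (X * Y * Z)%type) := mXY P t.1.1 t.1.2.
have Hu : forall n t, 0 <= u n t <= b t.
  move=> n [[x y] z]; rewrite /u /b /=.
  have [[Hn1 Hn2] [Hm1 Hm2]] := proj1 (HsQ n).
  split; first exact: Hn1.
  rewrite -Hm1 /mXY /sumZ; apply: (@le_sum _ (fun z => sQ n x y z)) => j; exact: Hn1.
have [phi [Hphi [L HL]]] := multi_subseq Hu (enum (@predT (X * Y * Z)%type)).
pose Qs : jdist X Y Z := fun x y z => L (x, y, z).
have Hcl : forall d, 0 < d -> exists N, forall n, (N <= n)%N ->
    forall x y z, Rabs (sQ (phi n) x y z - Qs x y z) < d.
  move=> d Hd; have [N HN] := HL d Hd; exists N => n Hn x y z.
  exact: (HN n Hn (x, y, z) (mem_enum _ _)).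
have Hnn : forall x y z, 0 <= Qs x y z.
  move=> x y z; apply: Rnot_lt_le => Hlt.
  have [N HN] := Hcl (- Qs x y z) ltac:(lra).
  have := HN N (leqnn _) x y z.
  have [[Hn1 _] _] := proj1 (HsQ (phi N)).
  have := Hn1 x y z => H0 /Rabs_def2; lra.
have Hmxy : forall x y, mXY Qs x y = mXY P x y.
  move=> x y; apply: Rminus_diag_uniq; apply: (zero_of_small (sum_one_ge0 Z)) => d Hd.
  have [N HN] := Hcl d Hd.
  have [_ [Hm1 _]] := proj1 (HsQ (phi N)).
  rewrite -(Hm1 x y) Rabs_minus_sym.
  apply: sum_close => z; apply: Rlt_le; exact: HN.
have Hmxz : forall x z, mXZ Qs x z = mXZ P x z.
  move=> x z; apply: Rminus_diag_uniq; apply: (zero_of_small (sum_one_ge0 Y)) => d Hd.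
  have [N HN] := Hcl d Hd.
  have [_ [_ Hm2]] := proj1 (HsQ (phi N)).
  rewrite -(Hm2 x z) Rabs_minus_sym.
  apply: sum_close => y; apply: Rlt_le; exact: HN.
have HQs : inDelta Qs.
  split => //.
  case: HP => _ <-.
  rewrite /sumX /sumY; apply: eq_bigr => x _; apply: eq_bigr => y _; exact: Hmxy.
exists Qs; split; first by split.
have H0 := nF _ HQs.
case: (Rle_lt_or_eq_dec _ _ H0) => [Hpos|Heq]; last by rewrite Heq.
exfalso.
have [dl [Hdl Hc]] := cF Qs HQs (F Qs / 2) ltac:(lra).
have [N HN] := Hcl dl Hdl.
have [M [HM1 HM2]] := archimed_cor1 (F Qs / 2) ltac:(lra).
pose n := maxn N M.
have Hn1 : (N <= n)%N by rewrite leq_maxl.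
have Hn2 : (M <= (phi n).+1)%N.
  apply: leqW; apply: leq_trans (incr_ge Hphi n); exact: leq_maxr.
have [[HD _] Hlt] := HsQ (phi n).
have := Hc _ HD (HN n Hn1) => /Rabs_def2 [Ha Hb].
have := inv_small (introT ltP HM2) Hn2.
lra.
Qed.
End Att.
Unset Implicit Arguments. Set Strict Implicit.

Theorem mainTheorem1 (X Y Z : finType)
  (UIY UIZ SI CI : jdist X Y Z -> R)
  (nnUIY : forall P, inDelta P -> 0 <= UIY P)
  (nnUIZ : forall P, inDelta P -> 0 <= UIZ P)
  (nnSI : forall P, inDelta P -> 0 <= SI P)
  (nnCI : forall P, inDelta P -> 0 <= CI P)
  (cUIY : continuous_on_Delta UIY) (cUIZ : continuous_on_Delta UIZ)
  (cSI : continuous_on_Delta SI) (cCI : continuous_on_Delta CI)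
  (h_i : forall P, inDelta P -> MI_X_YZ P = SI P + UIY P + UIZ P + CI P)
  (h_iiY : forall P, inDelta P -> MI_XY P = SI P + UIY P)
  (h_iiZ : forall P, inDelta P -> MI_XZ P = SI P + UIZ P)
  (h_iii : forall P P', inDelta P -> inDelta P' ->
     (forall x y, mXY P x y = mXY P' x y) -> (forall x z, mXZ P x z = mXZ P' x z) ->
     UIY P = UIY P' /\ UIZ P = UIZ P') :
  forall P, inDelta P ->
    (UIY P <= UIt_Y P /\ UIZ P <= UIt_Z P /\ SI P >= SIt P /\ CI P >= CIt P) /\
    ((exists Q, inDeltaP P Q /\ CI Q = 0) ->
       UIY P = UIt_Y P /\ UIZ P = UIt_Z P /\ SI P = SIt P /\ CI P = CIt P) /\
    ((UIY P = UIt_Y P \/ UIZ P = UIt_Z P \/ SI P = SIt P \/ CI P = CIt P) ->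
       exists Q, inDeltaP P Q /\ CI Q = 0).
Proof.
move=> P HP.
have HPP : inDeltaP P P by split.
have Hex : exists Q, inDeltaP P Q by exists P.
have Hs : is_inf (CIset CI P) (Inf (CIset CI P)).
  apply: inf_exists; first by exists (CI P), P.
  exists 0 => v [Q [[HQ _] ->]]; exact: nnCI.
set s := Inf (CIset CI P) in Hs *.
have key : forall Q, inDeltaP P Q ->
    MI_XY_Z Q = UIY P + CI Q /\ MI_XZ_Y Q = UIZ P + CI Q /\
    CoI Q = SI P - CI Q /\ MI_X_YZ Q = (SI P + UIY P + UIZ P) + CI Q.
  move=> Q [HQ [Hxy Hxz]].
  have [eY eZ] := h_iii Q P HQ HP Hxy Hxz.
  have mY := MI_XY_marg Hxy; have mZ := MI_XZ_marg Hxz.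
  have e1 : MI_XY_Z Q = MI_X_YZ Q - MI_XZ Q by rewrite /MI_XY_Z /MI_X_YZ /MI_XZ; ring.
  have e2 : MI_XZ_Y Q = MI_X_YZ Q - MI_XY Q by rewrite /MI_XZ_Y /MI_X_YZ /MI_XY; ring.
  have e3 : CoI Q = MI_XY Q - MI_XY_Z Q by [].
  have := h_i Q HQ; have := h_iiY Q HQ; have := h_iiZ Q HQ;
  have := h_iiY P HP; have := h_iiZ P HP.
  lra.
have EY : UIt_Y P = UIY P + s.
  apply: (min_shift _ Hs Hex) => Q HQ; exact: (proj1 (key Q HQ)).
have EZ : UIt_Z P = UIZ P + s.
  apply: (min_shift _ Hs Hex) => Q HQ; exact: (proj1 (proj2 (key Q HQ))).
have ES : SIt P = SI P - s.
  apply: (max_shift _ Hs Hex) => Q HQ; exact: (proj1 (proj2 (proj2 (key Q HQ)))).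
have EC : CIt P = CI P - s.
  rewrite /CIt (min_shift (c := SI P + UIY P + UIZ P) _ Hs Hex).
    rewrite h_i //; ring.
  move=> Q HQ; exact: (proj2 (proj2 (proj2 (key Q HQ)))).
have s0 : 0 <= s.
  apply: (proj2 Hs) => v [Q [[HQ _] ->]]; exact: nnCI.
have s1 : forall Q, inDeltaP P Q -> s <= CI Q.
  move=> Q HQ; apply: (proj1 Hs); by exists Q.
rewrite EY EZ ES EC.
split; first by have := s1 P HPP; lra.
split.
  move=> [Q [HQ HQ0]]; have := s1 Q HQ; lra.
move=> Heq.
have Hs0 : s = 0 by case: Heq => [|[|[|]]]; lra.
have Hs' : is_inf (CIset CI P) 0 by rewrite -Hs0.
apply: attain => //.

Qed.
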